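(* Let $\lambda\in(\frac16,\frac56)$. Then the graph $\mathrm{Gr}(F^\lambda)=\{(x,F^\lambda(x)):x\in[0,1]\}$ is not a self-similar compact subset of $\mathbb R^2$: there is no finite family $\{\Phi_i:\mathbb R^2\to\mathbb R^2\}_{i=1,\dots,N}$ of contracting similarities such that $\mathrm{Gr}(F^\lambda)=\bigcup_{i=1}^N\Phi_i(\mathrm{Gr}(F^\lambda))$.
   Context: Fix $\lambda>0$. Piecewise affine functions $F^\lambda_n:[0,1]\to\mathbb R$ are defined recursively. $F^\lambda_0\equiv0$, affine on the single interval $[0,1]$ (of generation $0$). Given $F^\lambda_n$ with its $4^n$ closed intervals of generation $n$ (covering $[0,1]$, disjoint interiors, $F^\lambda_n$ affine on each), on each interval $[a,b]$ of generation $n$, with $\ell=b-a$ and $m$ the slope of $F^\lambda_n$ there, $F^\lambda_{n+1}$ coincides with $F^\lambda_n$ at $a$, $a+\ell/3$, $a+2\ell/3$, $b$, equals $F^\lambda_n(a+\ell/2)+\lambda\ell\sqrt{1+m^2}$ at $a+\ell/2$, and is affine on each of $[a,a+\ell/3]$, $[a+\ell/3,a+\ell/2]$, $[a+\ell/2,a+2\ell/3]$, $[a+2\ell/3,b]$ (the intervals of generation $n+1$). The sequence $(F^\lambda_n(x))_n$ is nondecreasing and $F^\lambda(x):=\lim_n F^\lambda_n(x)$; for $\lambda\in(\frac16,\frac56)$ this limit is finite and $F^\lambda$ is continuous. *)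

(* Defs.v *)
From Stdlib Require Import Reals List.
From Coquelicot Require Import Coquelicot.
Import ListNotations.
Open Scope R_scope.

(* Breakpoints of F^lambda_n: list of points (x_i, F_n(x_i)), x_i increasing,
   consecutive pairs delimiting the intervals of generation n. *)
Fixpoint refine (lam : R) (l : list (R * R)) : list (R * R) :=
  match l with
  | p :: ((q :: _) as t) =>
      let a := fst p in let ya := snd p in
      let b := fst q in let yb := snd q in
      let ell := b - a in
      let m := (yb - ya) / ell in
      p :: (a + ell / 3, ya + m * (ell / 3))
        :: (a + ell / 2, ya + m * (ell / 2) + lam * ell * sqrt (1 + m ^ 2))
        :: (a + 2 * ell / 3, ya + m * (2 * ell / 3))
        :: refine lam t
  | _ => l
  end.

Fixpoint breakpoints (lam : R) (n : nat) : list (R * R) :=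
  match n with
  | O => [(0, 0); (1, 0)]
  | S k => refine lam (breakpoints lam k)
  end.

Fixpoint interp (l : list (R * R)) (x : R) : R :=
  match l with
  | p :: ((q :: _) as t) =>
      if Rle_dec x (fst q)
      then snd p + (snd q - snd p) / (fst q - fst p) * (x - fst p)
      else interp t x
  | [p] => snd p
  | [] => 0
  end.

Definition Fn (lam : R) (n : nat) (x : R) : R := interp (breakpoints lam n) x.

(* F^lambda(x) = lim_n F^lambda_n(x) (finite for lambda in (1/6,5/6)). *)
Definition Flim (lam : R) (x : R) : R := real (Lim_seq (fun n => Fn lam n x)).

Definition graphF (lam : R) (p : R * R) : Prop :=
  0 <= fst p <= 1 /\ snd p = Flim lam (fst p).

Definition dist2 (p q : R * R) : R :=
  sqrt ((fst p - fst q) ^ 2 + (snd p - snd q) ^ 2).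

Definition contracting_similarity (Phi : R * R -> R * R) : Prop :=
  exists r : R, 0 < r < 1 /\
    forall p q : R * R, dist2 (Phi p) (Phi q) = r * dist2 p q.

(* Main.v *)
Require Import Defs.
From Stdlib Require Import Reals Lra Lia List Classical.
From Coquelicot Require Import Coquelicot.
Import Defs.
Import ListNotations.
Open Scope R_scope.


Lemma sqrt_le_of_sq X Y : 0 <= Y -> X <= Y^2 -> sqrt X <= Y.
Proof. intros HY HX. rewrite <- (sqrt_pow2 Y HY). apply sqrt_le_1_alt; lra. Qed.

Lemma le_sqrt_of_sq X Y : Y^2 <= X -> Y <= sqrt X.
Proof. intros H. destruct (Rle_dec Y 0). pose proof (sqrt_pos X); lra.
  rewrite <- (sqrt_pow2 Y) by lra. apply sqrt_le_1_alt; lra. Qed.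

Lemma sqrt_eq_of X Y : 0 <= Y -> X = Y^2 -> sqrt X = Y.
Proof. intros HY ->. apply sqrt_pow2; lra. Qed.

Lemma dist2_nonneg p q : 0 <= dist2 p q.
Proof. apply sqrt_pos. Qed.

Lemma dist2_ge_x p q : Rabs (fst p - fst q) <= dist2 p q.
Proof. unfold dist2. apply le_sqrt_of_sq. rewrite pow2_abs. pose proof (pow2_ge_0 (snd p - snd q)); pose proof (pow2_ge_0 (fst p - fst q)); lra. Qed.

Lemma dist2_ge_y p q : Rabs (snd p - snd q) <= dist2 p q.
Proof. unfold dist2. apply le_sqrt_of_sq. rewrite pow2_abs. pose proof (pow2_ge_0 (snd p - snd q)); pose proof (pow2_ge_0 (fst p - fst q)); lra. Qed.

Lemma dist2_le_sum p q : dist2 p q <= Rabs (fst p - fst q) + Rabs (snd p - snd q).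
Proof. unfold dist2. apply sqrt_le_of_sq.
  pose proof (Rabs_pos (fst p - fst q)); pose proof (Rabs_pos (snd p - snd q)); lra.
  rewrite <- (pow2_abs (fst p - fst q)), <- (pow2_abs (snd p - snd q)).
  pose proof (Rabs_pos (fst p - fst q)); pose proof (Rabs_pos (snd p - snd q)); nra. Qed.

Lemma dist2_refl p : dist2 p p = 0.
Proof. unfold dist2. replace ((fst p - fst p)^2 + (snd p - snd p)^2) with 0 by ring. apply sqrt_0. Qed.

Lemma dist2_sym p q : dist2 p q = dist2 q p.
Proof. unfold dist2. f_equal. ring. Qed.

Lemma tri_vec a b c d : sqrt ((a + c)^2 + (b + d)^2) <= sqrt (a^2 + b^2) + sqrt (c^2 + d^2).
Proof.
  apply sqrt_le_of_sq.
  pose proof (sqrt_pos (a^2+b^2)); pose proof (sqrt_pos (c^2+d^2)); lra.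
  assert (H1: sqrt (a^2+b^2) ^2 = a^2+b^2) by (apply pow2_sqrt; pose proof (pow2_ge_0 a); pose proof (pow2_ge_0 b); pose proof (pow2_ge_0 c); pose proof (pow2_ge_0 d); lra).
  assert (H2: sqrt (c^2+d^2) ^2 = c^2+d^2) by (apply pow2_sqrt; pose proof (pow2_ge_0 a); pose proof (pow2_ge_0 b); pose proof (pow2_ge_0 c); pose proof (pow2_ge_0 d); lra).
  assert (H3: a*c + b*d <= sqrt (a^2+b^2) * sqrt (c^2+d^2)).
  { rewrite <- sqrt_mult_alt by (pose proof (pow2_ge_0 a); pose proof (pow2_ge_0 b); lra). apply le_sqrt_of_sq.
    replace ((a^2+b^2)*(c^2+d^2)) with ((a*c+b*d)^2 + (a*d-b*c)^2) by ring.
    pose proof (pow2_ge_0 (a*d-b*c)); lra. }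
  replace ((sqrt (a ^ 2 + b ^ 2) + sqrt (c ^ 2 + d ^ 2)) ^ 2) with
    (sqrt (a^2+b^2) ^2 + sqrt (c^2+d^2) ^2 + 2 * (sqrt (a ^ 2 + b ^ 2) * sqrt (c ^ 2 + d ^ 2))) by ring.
  rewrite H1, H2. lra.
Qed.

Lemma dist2_tri p q s : dist2 p s <= dist2 p q + dist2 q s.
Proof.
  unfold dist2.
  replace (fst p - fst s) with ((fst p - fst q) + (fst q - fst s)) by ring.
  replace (snd p - snd s) with ((snd p - snd q) + (snd q - snd s)) by ring.
  apply tri_vec.
Qed.

Lemma tri_add a b c : sqrt (a^2 + (b + c)^2) <= sqrt (a^2 + b^2) + Rabs c.
Proof.
  replace a with (a + 0) at 1 by ring.
  eapply Rle_trans. apply tri_vec.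
  right. f_equal. replace (0^2 + c^2) with (c^2) by ring.
  rewrite <- (pow2_abs c). apply sqrt_pow2, Rabs_pos.
Qed.


Definition ptA (p q : R*R) : R*R :=
  let a := fst p in let ya := snd p in let b := fst q in let yb := snd q in
  let ell := b - a in let m := (yb - ya) / ell in (a + ell / 3, ya + m * (ell / 3)).
Definition ptB (lam : R) (p q : R*R) : R*R :=
  let a := fst p in let ya := snd p in let b := fst q in let yb := snd q in
  let ell := b - a in let m := (yb - ya) / ell in
  (a + ell / 2, ya + m * (ell / 2) + lam * ell * sqrt (1 + m ^ 2)).
Definition ptC (p q : R*R) : R*R :=
  let a := fst p in let ya := snd p in let b := fst q in let yb := snd q in
  let ell := b - a in let m := (yb - ya) / ell in (a + 2 * ell / 3, ya + m * (2 * ell / 3)).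

Lemma refine_cons2 lam p q t :
  refine lam (p :: q :: t) = p :: ptA p q :: ptB lam p q :: ptC p q :: refine lam (q :: t).
Proof. reflexivity. Qed.

Lemma refine_head lam q t : exists R, refine lam (q :: t) = q :: R.
Proof. destruct t as [|r t]. exists []. reflexivity. rewrite refine_cons2. eexists; reflexivity. Qed.

Lemma ell_sqrt p q : fst p < fst q ->
  (fst q - fst p) * sqrt (1 + ((snd q - snd p) / (fst q - fst p)) ^ 2) = dist2 p q.
Proof.
  intros H. unfold dist2.
  rewrite <- (sqrt_pow2 (fst q - fst p)) at 1 by lra.
  rewrite <- sqrt_mult_alt by (pose proof (pow2_ge_0 (fst q - fst p)); lra).
  f_equal. field. lra.
Qed.

Lemma ptA_eq p q : fst p < fst q ->
  ptA p q = (fst p + (fst q - fst p)/3, snd p + (snd q - snd p)/3).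
Proof. intros H. unfold ptA. f_equal. field. lra. Qed.
Lemma ptC_eq p q : fst p < fst q ->
  ptC p q = (fst p + 2*(fst q - fst p)/3, snd p + 2*(snd q - snd p)/3).
Proof. intros H. unfold ptC. f_equal. field. lra. Qed.
Lemma ptB_eq lam p q : fst p < fst q ->
  ptB lam p q = (fst p + (fst q - fst p)/2, snd p + (snd q - snd p)/2 + lam * dist2 p q).
Proof. intros H. unfold ptB. cbv zeta. rewrite Rmult_assoc, (ell_sqrt p q H).
  f_equal. f_equal. field. lra. Qed.

Fixpoint sorted_x (l : list (R*R)) : Prop :=
  match l with
  | p :: ((q :: _) as t) => fst p < fst q /\ sorted_x t
  | _ => True
  end.

Fixpoint segb (s : R) (l : list (R*R)) : Prop :=
  match l with
  | p :: ((q :: _) as t) => dist2 p q <= s /\ segb s t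
  | _ => True
  end.

Fixpoint plen (l : list (R*R)) : R :=
  match l with
  | p :: ((q :: _) as t) => dist2 p q + plen t
  | _ => 0
  end.

Lemma sorted_cons_inv p t : sorted_x (p :: t) -> sorted_x t.
Proof. destruct t; simpl; tauto. Qed.

Lemma sorted_refine lam l : sorted_x l -> sorted_x (refine lam l).
Proof.
  induction l as [|p l IH]; [simpl; tauto|].
  destruct l as [|q t]; [simpl; tauto|].
  intros [Hpq Hs]. rewrite refine_cons2.
  specialize (IH Hs). destruct (refine_head lam q t) as [R HR]. rewrite HR in IH |- *.
  rewrite ptA_eq, ptB_eq, ptC_eq by lra. simpl. repeat split; try lra. exact IH.
Qed.

Lemma In_refine lam l p : In p l -> In p (refine lam l).
Proof.
  induction l as [|p0 l IH]; [simpl; tauto|].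
  destruct l as [|q t]; [simpl; tauto|].
  rewrite refine_cons2. intros [H|H]; [left; exact H|].
  right; right; right; right. apply IH, H.
Qed.

Lemma range_refine lam l : sorted_x l -> (forall p, In p l -> 0 <= fst p <= 1) ->
  forall p, In p (refine lam l) -> 0 <= fst p <= 1.
Proof.
  induction l as [|p0 l IH]; [simpl; tauto|].
  destruct l as [|q t]; [simpl; intros _ H p Hp; apply H; exact Hp|].
  intros [Hpq Hs] Hr. rewrite refine_cons2.
  assert (H0 := Hr p0 (or_introl eq_refl)). assert (H1 := Hr q (or_intror (or_introl eq_refl))).
  rewrite ptA_eq, ptB_eq, ptC_eq by lra.
  intros p [H|[H|[H|[H|H]]]]; try (subst p; simpl; lra).
  apply (IH Hs); [intros; apply Hr; right; assumption| exact H].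
Qed.

Definition rho (lam : R) := Rmax (1/3) (1/6 + lam).

Lemma dist_third p q : fst p < fst q ->
  dist2 p (fst p + (fst q - fst p)/3, snd p + (snd q - snd p)/3) = dist2 p q / 3.
Proof.
  intros H. unfold dist2. cbn [fst snd]. apply sqrt_eq_of.
  pose proof (sqrt_pos ((fst p - fst q) ^ 2 + (snd p - snd q) ^ 2)); lra.
  replace ((sqrt ((fst p - fst q) ^ 2 + (snd p - snd q) ^ 2) / 3) ^ 2) with
    ((sqrt ((fst p - fst q) ^ 2 + (snd p - snd q) ^ 2))^2 / 9) by field.
  rewrite pow2_sqrt by (pose proof (pow2_ge_0 (fst p - fst q)); pose proof (pow2_ge_0 (snd p - snd q)); lra).
  field.
Qed.

Lemma dist_third' p q : fst p < fst q ->
  dist2 (fst p + 2*(fst q - fst p)/3, snd p + 2*(snd q - snd p)/3) q = dist2 p q / 3.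
Proof.
  intros H. rewrite <- dist_third by exact H. unfold dist2. cbn [fst snd]. f_equal. field.
Qed.

Lemma dist_AB lam p q : fst p < fst q -> 0 <= lam ->
  dist2 (fst p + (fst q - fst p)/3, snd p + (snd q - snd p)/3)
        (fst p + (fst q - fst p)/2, snd p + (snd q - snd p)/2 + lam * dist2 p q)
  <= dist2 p q / 6 + lam * dist2 p q.
Proof.
  intros H Hl. unfold dist2 at 1. cbn [fst snd].
  replace (fst p + (fst q - fst p) / 3 - (fst p + (fst q - fst p) / 2)) with ((fst p - fst q)/6) by field.
  replace (snd p + (snd q - snd p) / 3 - (snd p + (snd q - snd p) / 2 + lam * dist2 p q))
    with ((snd p - snd q)/6 + (- (lam * dist2 p q))) by field.
  eapply Rle_trans. apply tri_add.
  rewrite Rabs_Ropp, Rabs_right by (pose proof (dist2_nonneg p q); nra).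
  apply Rplus_le_compat_r. right. unfold dist2. apply sqrt_eq_of.
  pose proof (sqrt_pos ((fst p - fst q) ^ 2 + (snd p - snd q) ^ 2)); lra.
  replace ((sqrt ((fst p - fst q) ^ 2 + (snd p - snd q) ^ 2) / 6) ^ 2) with
    ((sqrt ((fst p - fst q) ^ 2 + (snd p - snd q) ^ 2))^2 / 36) by field.
  rewrite pow2_sqrt by (pose proof (pow2_ge_0 (fst p - fst q)); pose proof (pow2_ge_0 (snd p - snd q)); lra).
  field.
Qed.

Lemma dist_BC lam p q : fst p < fst q -> 0 <= lam ->
  dist2 (fst p + (fst q - fst p)/2, snd p + (snd q - snd p)/2 + lam * dist2 p q)
        (fst p + 2*(fst q - fst p)/3, snd p + 2*(snd q - snd p)/3)
  <= dist2 p q / 6 + lam * dist2 p q.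
Proof.
  intros H Hl. rewrite dist2_sym.
  unfold dist2 at 1. cbn [fst snd].
  replace (fst p + 2 * (fst q - fst p) / 3 - (fst p + (fst q - fst p) / 2)) with ((fst q - fst p)/6) by field.
  replace (snd p + 2 * (snd q - snd p) / 3 - (snd p + (snd q - snd p) / 2 + lam * dist2 p q))
    with ((snd q - snd p)/6 + (- (lam * dist2 p q))) by field.
  eapply Rle_trans. apply tri_add.
  rewrite Rabs_Ropp, Rabs_right by (pose proof (dist2_nonneg p q); nra).
  apply Rplus_le_compat_r. right. unfold dist2. apply sqrt_eq_of.
  pose proof (sqrt_pos ((fst p - fst q) ^ 2 + (snd p - snd q) ^ 2)); lra.
  replace ((sqrt ((fst p - fst q) ^ 2 + (snd p - snd q) ^ 2) / 6) ^ 2) with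
    ((sqrt ((fst p - fst q) ^ 2 + (snd p - snd q) ^ 2))^2 / 36) by field.
  rewrite pow2_sqrt by (pose proof (pow2_ge_0 (fst p - fst q)); pose proof (pow2_ge_0 (snd p - snd q)); lra).
  field.
Qed.

Lemma segb_refine lam s l : 0 <= lam -> sorted_x l -> segb s l -> segb (rho lam * s) (refine lam l).
Proof.
  intros Hl.
  assert (Hr1: 1/3 <= rho lam) by apply Rmax_l.
  assert (Hr2: 1/6 + lam <= rho lam) by apply Rmax_r.
  induction l as [|p l IH]; [simpl; tauto|].
  destruct l as [|q t]; [simpl; tauto|].
  intros [Hpq Hs] [Hd Hb]. rewrite refine_cons2.
  specialize (IH Hs Hb). destruct (refine_head lam q t) as [R HR]. rewrite HR in IH |- *.
  rewrite ptA_eq, ptB_eq, ptC_eq by lra.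
  pose proof (dist2_nonneg p q).
  simpl. repeat split.
  - rewrite dist_third by lra. nra.
  - eapply Rle_trans. apply dist_AB; lra. nra.
  - eapply Rle_trans. apply dist_BC; lra. nra.
  - rewrite dist_third' by lra. nra.
  - exact IH.
Qed.

Lemma plen_refine lam l : 0 <= lam -> sorted_x l -> (2/3 + 2*lam) * plen l <= plen (refine lam l).
Proof.
  intros Hl.
  induction l as [|p l IH]; [simpl; lra|].
  destruct l as [|q t]; [simpl; lra|].
  intros [Hpq Hs]. rewrite refine_cons2.
  specialize (IH Hs). destruct (refine_head lam q t) as [R HR]. rewrite HR in IH |- *.
  rewrite ptA_eq, ptB_eq, ptC_eq by lra.
  change (plen (p :: q :: t)) with (dist2 p q + plen (q :: t)).
  change (plen (p :: (fst p + (fst q - fst p) / 3, snd p + (snd q - snd p) / 3)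
     :: (fst p + (fst q - fst p) / 2, snd p + (snd q - snd p) / 2 + lam * dist2 p q)
        :: (fst p + 2 * (fst q - fst p) / 3, snd p + 2 * (snd q - snd p) / 3) :: q :: R))
  with (dist2 p (fst p + (fst q - fst p) / 3, snd p + (snd q - snd p) / 3) +
        (dist2 (fst p + (fst q - fst p) / 3, snd p + (snd q - snd p) / 3)
               (fst p + (fst q - fst p) / 2, snd p + (snd q - snd p) / 2 + lam * dist2 p q) +
        (dist2 (fst p + (fst q - fst p) / 2, snd p + (snd q - snd p) / 2 + lam * dist2 p q)
               (fst p + 2 * (fst q - fst p) / 3, snd p + 2 * (snd q - snd p) / 3) +
        (dist2 (fst p + 2 * (fst q - fst p) / 3, snd p + 2 * (snd q - snd p) / 3) q +
         plen (q :: R))))).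
  rewrite dist_third, dist_third' by lra.
  pose proof (dist2_ge_y (fst p + (fst q - fst p) / 3, snd p + (snd q - snd p) / 3)
               (fst p + (fst q - fst p) / 2, snd p + (snd q - snd p) / 2 + lam * dist2 p q)) as H1.
  pose proof (dist2_ge_y (fst p + (fst q - fst p) / 2, snd p + (snd q - snd p) / 2 + lam * dist2 p q)
               (fst p + 2 * (fst q - fst p) / 3, snd p + 2 * (snd q - snd p) / 3)) as H2.
  cbn [fst snd] in H1, H2.
  pose proof (dist2_nonneg p q).
  set (h := lam * dist2 p q) in *.
  assert (Hh: 0 <= h) by (unfold h; nra).
  set (dy := snd q - snd p) in *.
  replace (snd p + dy / 3 - (snd p + dy / 2 + h)) with (-(dy/6 + h)) in H1 by field.
  replace (snd p + dy / 2 + h - (snd p + 2 * dy / 3)) with (-(dy/6 - h)) in H2 by field.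
  rewrite Rabs_Ropp in H1, H2.
  assert (Rabs (dy/6+h) + Rabs (dy/6 - h) >= 2*h).
  { destruct (Rcase_abs (dy/6+h)); destruct (Rcase_abs (dy/6-h));
    [rewrite (Rabs_left (dy/6+h)), (Rabs_left (dy/6-h)) by lra
    |rewrite (Rabs_left (dy/6+h)), (Rabs_right (dy/6-h)) by lra
    |rewrite (Rabs_right (dy/6+h)), (Rabs_left (dy/6-h)) by lra
    |rewrite (Rabs_right (dy/6+h)), (Rabs_right (dy/6-h)) by lra]; lra. }
  unfold h in *. nra.
Qed.


Lemma interp_cons2 (p q : R*R) (t : list (R*R)) (x : R) : interp (p :: q :: t) x =
  if Rle_dec x (fst q) then snd p + (snd q - snd p) / (fst q - fst p) * (x - fst p)
  else interp (q :: t) x.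
Proof. reflexivity. Qed.

Lemma sorted_first (p q : R*R) (t : list (R*R)) (r : R*R) : sorted_x (p :: q :: t) -> In r t -> fst p < fst r.
Proof.
  revert p q. induction t as [|q' t IH]; intros p q Hs Hr; [destruct Hr|].
  destruct Hs as [H1 [H2 H3]].
  destruct Hr as [<-|Hr]; [lra|].
  assert (fst q < fst r) by (apply (IH q q'); [split; assumption| exact Hr]). lra.
Qed.

Lemma sorted_le_head (p : R*R) (t : list (R*R)) (r : R*R) : sorted_x (p :: t) -> In r t -> fst p < fst r.
Proof.
  destruct t as [|q t]; [intros _ []|].
  intros Hs [<-|Hr]. destruct Hs; lra. eapply sorted_first; eauto.
Qed.

Lemma interp_head (q : R*R) (t : list (R*R)) : sorted_x (q :: t) -> interp (q :: t) (fst q) = snd q.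
Proof.
  destruct t as [|r t]; [reflexivity|].
  intros [H _]. rewrite interp_cons2. destruct (Rle_dec (fst q) (fst r)); [ring|lra].
Qed.

Lemma interp_at (l : list (R*R)) (p : R*R) : sorted_x l -> In p l -> interp l (fst p) = snd p.
Proof.
  induction l as [|p0 l IH]; [intros _ []|].
  intros Hs Hp. destruct l as [|q t].
  - destruct Hp as [<-|[]]. reflexivity.
  - rewrite interp_cons2. destruct Hs as [Hpq Hs].
    destruct Hp as [<-|Hp].
    + destruct (Rle_dec (fst p0) (fst q)); [ring|lra].
    + destruct (Rle_dec (fst p) (fst q)) as [Hle|Hgt].
      * destruct Hp as [<-|Hp]. field. lra.
        pose proof (sorted_le_head q t p Hs Hp). lra.
      * apply IH; assumption.
Qed.

Lemma interp_lip (l : list (R*R)) : sorted_x l ->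
  exists K, 0 <= K /\ forall x x', Rabs (interp l x - interp l x') <= K * Rabs (x - x').
Proof.
  induction l as [|p l IH]; intros Hs.
  - exists 0. split; [lra|]. intros. simpl. rewrite Rminus_0_r, Rabs_R0. lra.
  - destruct l as [|q t].
    + exists 0. split; [lra|]. intros. simpl. rewrite Rminus_eq_0, Rabs_R0. lra.
    + destruct Hs as [Hpq Hs]. destruct (IH Hs) as [K [HK HL]].
      set (m := (snd q - snd p) / (fst q - fst p)).
      exists (Rmax (Rabs m) K). split. eapply Rle_trans; [apply HK| apply Rmax_r].
      assert (Hm: Rabs m <= Rmax (Rabs m) K) by apply Rmax_l.
      assert (HK2: K <= Rmax (Rabs m) K) by apply Rmax_r.
      pose proof (Rabs_pos m).
      assert (Hq: snd p + m * (fst q - fst p) = snd q) by (unfold m; field; lra).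
      pose proof (interp_head q t Hs) as Hh.
      intros x x'. rewrite !interp_cons2. fold m.
      destruct (Rle_dec x (fst q)); destruct (Rle_dec x' (fst q)).
      * replace (snd p + m * (x - fst p) - (snd p + m * (x' - fst p))) with (m * (x - x')) by ring.
        rewrite Rabs_mult. apply Rmult_le_compat_r; [apply Rabs_pos| lra].
      * replace (snd p + m * (x - fst p) - interp (q :: t) x') with
          (m * (x - fst q) + (interp (q :: t) (fst q) - interp (q :: t) x')) by (rewrite Hh; lra).
        eapply Rle_trans. apply Rabs_triang. rewrite Rabs_mult.
        specialize (HL (fst q) x').
        rewrite (Rabs_left1 (x - fst q)) in * by lra.
        rewrite (Rabs_left1 (fst q - x')) in HL by lra.
        rewrite (Rabs_left1 (x - x')) by lra. nra.
      * replace (interp (q :: t) x - (snd p + m * (x' - fst p))) with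
          ((interp (q :: t) x - interp (q :: t) (fst q)) + m * (fst q - x')) by (rewrite Hh; lra).
        eapply Rle_trans. apply Rabs_triang. rewrite Rabs_mult.
        specialize (HL x (fst q)).
        rewrite (Rabs_right (fst q - x')) by lra.
        rewrite (Rabs_right (x - fst q)) in HL by lra.
        rewrite (Rabs_right (x - x')) by lra. nra.
      * eapply Rle_trans. apply HL. apply Rmult_le_compat_r; [apply Rabs_pos| lra].
Qed.


Lemma interp_refine lam s l : 0 <= lam -> 0 <= s -> sorted_x l -> segb s l ->
  forall x, interp l x <= interp (refine lam l) x <= interp l x + lam * s.
Proof.
  intros Hl Hs0.
  induction l as [|p l IH]; intros Hs Hb x.
  - simpl. nra.
  - destruct l as [|q t].
    + simpl. nra.
    + destruct Hs as [Hpq Hs]. destruct Hb as [Hd Hb].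
      specialize (IH Hs Hb x).
      rewrite refine_cons2. destruct (refine_head lam q t) as [R HR]. rewrite HR in IH |- *.
      rewrite ptA_eq, ptB_eq, ptC_eq by lra.
      rewrite !interp_cons2. cbn [fst snd].
      pose proof (dist2_nonneg p q) as Hd0.
      set (h := lam * dist2 p q) in *.
      assert (Hh: 0 <= h <= lam * s) by (unfold h; split; nra).
      set (ell := fst q - fst p) in *.
      set (dy := snd q - snd p) in *.
      assert (Hell: 0 < ell) by (unfold ell; lra).
      set (ch := snd p + dy / ell * (x - fst p)).
      destruct (Rle_dec x (fst q)) as [Hxq|Hxq].
      * destruct (Rle_dec x (fst p + ell / 3)) as [H1|H1].
        { replace (snd p + (snd p + dy / 3 - snd p) / (fst p + ell / 3 - fst p) * (x - fst p)) with ch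
            by (unfold ch; field; lra). nra. }
        destruct (Rle_dec x (fst p + ell / 2)) as [H2|H2].
        { set (w := (x - (fst p + ell / 3)) / (ell / 6)).
          assert (Hw: w * (ell / 6) = x - (fst p + ell / 3)) by (unfold w; field; lra).
          assert (0 <= w <= 1) by nra.
          replace (snd p + dy / 3 + (snd p + dy / 2 + h - (snd p + dy / 3)) /
                    (fst p + ell / 2 - (fst p + ell / 3)) * (x - (fst p + ell / 3)))
            with (ch + h * w) by (unfold ch, w; field; lra). nra. }
        destruct (Rle_dec x (fst p + 2 * ell / 3)) as [H3|H3].
        { set (w := (fst p + 2 * ell / 3 - x) / (ell / 6)).
          assert (Hw: w * (ell / 6) = fst p + 2 * ell / 3 - x) by (unfold w; field; lra).
          assert (0 <= w <= 1) by nra.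
          replace (snd p + dy / 2 + h + (snd p + 2 * dy / 3 - (snd p + dy / 2 + h)) /
                    (fst p + 2 * ell / 3 - (fst p + ell / 2)) * (x - (fst p + ell / 2)))
            with (ch + h * w) by (unfold ch, w; field; lra). nra. }
        destruct (Rle_dec x (fst q)) as [H4|H4]; [|lra].
        { replace (snd p + 2 * dy / 3 + (snd q - (snd p + 2 * dy / 3)) / (fst q - (fst p + 2 * ell / 3)) *
                    (x - (fst p + 2 * ell / 3))) with ch
            by (unfold ch, dy, ell in *; field; lra). nra. }
      * destruct (Rle_dec x (fst p + ell / 3)) as [H1|H1]; [unfold ell in *; lra|].
        destruct (Rle_dec x (fst p + ell / 2)) as [H2|H2]; [unfold ell in *; lra|].
        destruct (Rle_dec x (fst p + 2 * ell / 3)) as [H3|H3]; [unfold ell in *; lra|].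
        destruct (Rle_dec x (fst q)) as [H4|H4]; [lra|].
        exact IH.
Qed.


Lemma rho_bounds lam : 1/6 < lam < 5/6 -> 0 < rho lam < 1.
Proof. intros H. unfold rho, Rmax. destruct (Rle_dec (1/3) (1/6+lam)); lra. Qed.

Lemma bp_S lam n : breakpoints lam (S n) = refine lam (breakpoints lam n).
Proof. reflexivity. Qed.

Lemma bp_inv lam n : 1/6 < lam < 5/6 ->
  sorted_x (breakpoints lam n) /\ segb (rho lam ^ n) (breakpoints lam n) /\
  (forall p, In p (breakpoints lam n) -> 0 <= fst p <= 1) /\
  In (0,0) (breakpoints lam n) /\ In (1,0) (breakpoints lam n) /\
  (2/3 + 2*lam) ^ n <= plen (breakpoints lam n).
Proof.
  intros Hl. induction n as [|n IH].
  - simpl. assert (Hd: dist2 (0,0) (1,0) = 1).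
    { unfold dist2. cbn [fst snd]. apply sqrt_eq_of; lra. }
    rewrite Hd. split; [split; [lra|exact I]|].
    split; [split; [lra|exact I]|].
    split; [intros q [Hq|[Hq|[]]]; subst q; simpl; lra|].
    split; [left; reflexivity|]. split; [right; left; reflexivity|]. lra.
  - destruct IH as [Hs [Hb [Hr [H0 [H1 Hp]]]]].
    rewrite bp_S. split; [apply sorted_refine, Hs|].
    split; [simpl; apply segb_refine; [lra|exact Hs|exact Hb]|].
    split; [apply range_refine; assumption|].
    split; [apply In_refine, H0|].
    split; [apply In_refine, H1|].
    simpl. eapply Rle_trans; [|apply plen_refine; [lra|exact Hs]].
      apply Rmult_le_compat_l; [lra|exact Hp].
Qed.

Lemma Fn_S lam n x : Fn lam (S n) x = interp (refine lam (breakpoints lam n)) x.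
Proof. reflexivity. Qed.

Lemma Fn0 lam x : Fn lam 0 x = 0.
Proof. unfold Fn. simpl. destruct (Rle_dec x 1); [field|reflexivity]. Qed.

Lemma Fn_step lam n x : 1/6 < lam < 5/6 ->
  Fn lam n x <= Fn lam (S n) x <= Fn lam n x + lam * rho lam ^ n.
Proof.
  intros Hl. destruct (bp_inv lam n Hl) as [Hs [Hb _]].
  rewrite Fn_S. unfold Fn. apply interp_refine; try lra; try assumption.
  apply pow_le. pose proof (rho_bounds lam Hl); lra.
Qed.

Definition E lam n := lam * rho lam ^ n / (1 - rho lam).

Lemma Fn_tail lam n j x : 1/6 < lam < 5/6 ->
  Fn lam n x <= Fn lam (n + j) x <= Fn lam n x + E lam n - E lam (n + j).
Proof.
  intros Hl. pose proof (rho_bounds lam Hl) as Hr.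
  induction j as [|j IH].
  - rewrite Nat.add_0_r. lra.
  - rewrite Nat.add_succ_r. pose proof (Fn_step lam (n + j) x Hl).
    assert (E lam (n + j) - E lam (S (n + j)) = lam * rho lam ^ (n + j)).
    { unfold E. simpl. field. lra. }
    lra.
Qed.

Lemma E_pos lam n : 1/6 < lam < 5/6 -> 0 <= E lam n.
Proof. intros Hl. pose proof (rho_bounds lam Hl). unfold E.
  apply Rmult_le_pos. apply Rmult_le_pos. lra. apply pow_le. lra.
  apply Rlt_le, Rinv_0_lt_compat. lra. Qed.

Lemma Fn_upper lam n k x : 1/6 < lam < 5/6 -> Fn lam k x <= Fn lam n x + E lam n.
Proof.
  intros Hl. destruct (Nat.le_gt_cases n k) as [H|H].
  - replace k with (n + (k - n))%nat by lia. pose proof (Fn_tail lam n (k - n) x Hl).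
    pose proof (E_pos lam (n + (k-n)) Hl). lra.
  - replace n with (k + (n - k))%nat by lia. pose proof (Fn_tail lam k (n - k) x Hl).
    pose proof (E_pos lam (k + (n-k)) Hl). pose proof (E_pos lam (k + (n - k)) Hl). lra.
Qed.

Lemma Fn_lower lam n k x : 1/6 < lam < 5/6 -> (n <= k)%nat -> Fn lam n x <= Fn lam k x.
Proof.
  intros Hl H. replace k with (n + (k - n))%nat by lia. apply (Fn_tail lam n (k-n) x Hl).
Qed.

Lemma real_bounds (u : nat -> R) a b : (forall k, u k <= b) ->
  (exists N, forall k, (N <= k)%nat -> a <= u k) -> a <= real (Lim_seq u) <= b.
Proof.
  intros Hb [N Ha].
  assert (H1: Rbar_le (Lim_seq u) (Lim_seq (fun _ => b))).
  { apply Lim_seq_le_loc. exists 0%nat. intros; apply Hb. }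
  assert (H2: Rbar_le (Lim_seq (fun _ => a)) (Lim_seq u)).
  { apply Lim_seq_le_loc. exists N. intros; apply Ha; assumption. }
  rewrite Lim_seq_const in H1, H2.
  destruct (Lim_seq u); simpl in *; lra.
Qed.

Lemma Flim_bounds lam n x : 1/6 < lam < 5/6 ->
  Fn lam n x <= Flim lam x <= Fn lam n x + E lam n.
Proof.
  intros Hl. unfold Flim. apply real_bounds.
  - intros k. apply Fn_upper, Hl.
  - exists n. intros k Hk. apply Fn_lower; assumption.
Qed.

Lemma Fn_nonneg lam n x : 1/6 < lam < 5/6 -> 0 <= Fn lam n x.
Proof. intros Hl. pose proof (Fn_lower lam 0 n x Hl (Nat.le_0_l n)). rewrite Fn0 in H. exact H. Qed.

Lemma Flim_range lam x : 1/6 < lam < 5/6 -> 0 <= Flim lam x <= E lam 0.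
Proof. intros Hl. pose proof (Flim_bounds lam 0 x Hl). rewrite Fn0 in H. lra. Qed.

Lemma E_small lam eps : 1/6 < lam < 5/6 -> 0 < eps -> exists n, E lam n < eps.
Proof.
  intros Hl He. pose proof (rho_bounds lam Hl) as Hr.
  destruct (pow_lt_1_zero (rho lam) ltac:(rewrite Rabs_right; lra) (eps * (1 - rho lam) / lam))
    as [N HN].
  { apply Rmult_lt_0_compat. nra. apply Rinv_0_lt_compat; lra. }
  exists N. specialize (HN N (le_n N)). rewrite Rabs_right in HN by (apply Rle_ge, pow_le; lra).
  unfold E. apply (Rmult_lt_reg_r (1 - rho lam)). lra.
  replace (lam * rho lam ^ N / (1 - rho lam) * (1 - rho lam)) with (lam * rho lam ^ N) by (field; lra).
  apply (Rmult_lt_reg_r (/ lam)). apply Rinv_0_lt_compat; lra.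
  replace (lam * rho lam ^ N * / lam) with (rho lam ^ N) by (field; lra).
  replace (eps * (1 - rho lam) * / lam) with (eps * (1 - rho lam) / lam) by (field; lra). exact HN.
Qed.

Lemma pow_le1 x n : 0 <= x <= 1 -> x ^ n <= 1.
Proof. intros H. induction n; simpl. lra. nra. Qed.

Lemma Flim_at lam n p : 1/6 < lam < 5/6 -> In p (breakpoints lam n) -> Flim lam (fst p) = snd p.
Proof.
  intros Hl Hp.
  assert (Hk: forall k, (n <= k)%nat -> Fn lam k (fst p) = snd p).
  { intros k Hk. replace k with (n + (k - n))%nat by lia. generalize (k - n)%nat. intros j.
    assert (Hin: In p (breakpoints lam (n + j))).
    { induction j as [|j IH]. rewrite Nat.add_0_r. exact Hp.
      rewrite Nat.add_succ_r, bp_S. apply In_refine, IH. }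
    unfold Fn. apply interp_at; [apply (bp_inv lam (n+j) Hl)|exact Hin]. }
  destruct (Rtotal_order (Flim lam (fst p)) (snd p)) as [H|[H|H]]; [|exact H|].
  - pose proof (Flim_bounds lam n (fst p) Hl). rewrite (Hk n (le_n n)) in H0. lra.
  - destruct (E_small lam (Flim lam (fst p) - snd p) Hl ltac:(lra)) as [m Hm].
    pose proof (Flim_bounds lam (n + m) (fst p) Hl). rewrite (Hk (n+m)%nat ltac:(lia)) in H0.
    assert (E lam (n + m) <= E lam m).
    { unfold E. pose proof (rho_bounds lam Hl). unfold Rdiv. apply Rmult_le_compat_r.
      apply Rlt_le, Rinv_0_lt_compat; lra. apply Rmult_le_compat_l; [lra|].
      rewrite pow_add. rewrite <- (Rmult_1_l (rho lam ^ m)) at 2. apply Rmult_le_compat_r.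
      apply pow_le; lra. apply pow_le1; lra. }
    lra.
Qed.


Lemma abs_le_b a b : Rabs a <= b -> -b <= a <= b.
Proof. unfold Rabs. destruct (Rcase_abs a); lra. Qed.

Lemma Flim_cont lam x : 1/6 < lam < 5/6 -> continuity_pt (Flim lam) x.
Proof.
  intros Hl eps Heps.
  destruct (E_small lam (eps/3) Hl ltac:(lra)) as [n Hn].
  destruct (interp_lip (breakpoints lam n) (proj1 (bp_inv lam n Hl))) as [K [HK HL]].
  exists (eps / (3 * (K + 1))). split.
  { apply Rdiv_lt_0_compat; lra. }
  intros x' [_ Hd]. simpl in Hd |- *. unfold R_dist in *.
  pose proof (Flim_bounds lam n x Hl). pose proof (Flim_bounds lam n x' Hl).
  pose proof (E_pos lam n Hl).
  specialize (HL x' x). fold (Fn lam n x') (Fn lam n x) in HL.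
  assert (K * Rabs (x' - x) <= eps / 3).
  { assert (Rabs (x' - x) * (3 * (K + 1)) < eps).
    { apply (Rmult_lt_reg_r (/ (3 * (K + 1)))). apply Rinv_0_lt_compat; lra.
      replace (Rabs (x' - x) * (3 * (K + 1)) * / (3 * (K + 1))) with (Rabs (x' - x)) by (field; lra).
      exact Hd. }
    pose proof (Rabs_pos (x' - x)). nra. }
  apply abs_le_b in HL. apply Rabs_def1; lra.
Qed.

Definition adj (p q : R*R) (l : list (R*R)) := exists l1 l2, l = l1 ++ p :: q :: l2.

Lemma adj_refine lam p q l : adj p q l ->
  adj (ptA p q) (ptB lam p q) (refine lam l) /\ adj (ptB lam p q) (ptC p q) (refine lam l).
Proof.
  intros [l1 [l2 ->]]. revert l2. induction l1 as [|x l1 IH]; intros l2.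
  - cbn [app]. rewrite refine_cons2. split.
    exists [p], (ptC p q :: refine lam (q :: l2)). reflexivity.
    exists [p; ptA p q], (refine lam (q :: l2)). reflexivity.
  - cbn [app]. destruct (IH l2) as [[a1 [a2 Ha]] [b1 [b2 Hb]]].
    destruct (l1 ++ p :: q :: l2) as [|y r] eqn:E.
    + destruct l1; discriminate.
    + rewrite refine_cons2. split.
      * exists (x :: ptA x y :: ptB lam x y :: ptC x y :: a1), a2. rewrite Ha. reflexivity.
      * exists (x :: ptA x y :: ptB lam x y :: ptC x y :: b1), b2. rewrite Hb. reflexivity.
Qed.

Lemma adj_sorted p q l : sorted_x l -> adj p q l -> fst p < fst q.
Proof.
  intros Hs [l1 [l2 ->]]. induction l1 as [|x l1 IH].
  - simpl in Hs. tauto.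
  - apply IH. cbn [app] in Hs. destruct (l1 ++ p :: q :: l2) eqn:E.
    destruct l1; discriminate. destruct Hs as [_ Hs]. exact Hs.
Qed.

Lemma adj_In p q l : adj p q l -> In p l /\ In q l.
Proof. intros [l1 [l2 ->]]. split; apply in_or_app; right; simpl; tauto. Qed.

Lemma steep lam n : 1/6 < lam < 5/6 ->
  (exists p q, adj p q (breakpoints lam n) /\ INR n * (fst q - fst p) <= snd q - snd p) /\
  (exists p q, adj p q (breakpoints lam n) /\ snd q - snd p <= - INR n * (fst q - fst p)).
Proof.
  intros Hl. induction n as [|n [[p [q [Ha Hi]]] [p' [q' [Ha' Hi']]]]].
  - simpl. split; exists (0,0), (1,0); (split; [exists [], []; reflexivity|simpl; lra]).
  - rewrite bp_S. rewrite S_INR. pose proof (proj1 (bp_inv lam n Hl)) as Hs.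
    split.
    + pose proof (adj_sorted p q _ Hs Ha) as Hpq.
      exists (ptA p q), (ptB lam p q). split. apply (adj_refine lam p q _ Ha).
      rewrite ptA_eq, ptB_eq by lra. cbn [fst snd].
      pose proof (dist2_ge_x p q). rewrite Rabs_left in H by lra.
      pose proof (pos_INR n). nra.
    + pose proof (adj_sorted p' q' _ Hs Ha') as Hpq.
      exists (ptB lam p' q'), (ptC p' q'). split. apply (adj_refine lam p' q' _ Ha').
      rewrite ptC_eq, ptB_eq by lra. cbn [fst snd].
      pose proof (dist2_ge_x p' q'). rewrite Rabs_left in H by lra.
      pose proof (pos_INR n). nra.
Qed.


Lemma cont_lin (h : R -> R) a b c : (forall x, continuity_pt h x) ->
  continuity (fun s => a * h s + b * s + c).
Proof.
  intros Hc x.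
  change (fun s => a * h s + b * s + c) with
    (plus_fct (plus_fct (mult_fct (fct_cte a) h) (mult_fct (fct_cte b) id)) (fct_cte c)).
  apply continuity_pt_plus; [apply continuity_pt_plus|].
  - apply continuity_pt_mult; [apply continuity_pt_const; intros ? ?; reflexivity| apply Hc].
  - apply continuity_pt_mult; [apply continuity_pt_const; intros ? ?; reflexivity| apply continuity_pt_id].
  - apply continuity_pt_const; intros ? ?; reflexivity.
Qed.

Lemma gen2 (h : R -> R) : (forall x, continuity_pt h x) -> h 1 < h 0 ->
  forall x1 x2, 0 <= x1 < x2 -> x2 <= 1 -> h x1 < h x2 ->
  exists s1 s2, 0 <= s1 <= 1 /\ 0 <= s2 <= 1 /\ s1 <> s2 /\ h s1 = h s2.
Proof.
  intros Hc H01 x1 x2 H12 H2 Hh.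
  destruct (Rlt_dec (h 1) (h x2)) as [HA|HB].
  - set (w := (Rmax (h x1) (h 1) + h x2) / 2).
    assert (Hw1: h x1 < w) by (unfold w; pose proof (Rmax_l (h x1) (h 1)); pose proof (Rmax_r (h x1) (h 1)); unfold Rmax in *; destruct Rle_dec; lra).
    assert (Hw2: h 1 < w) by (unfold w; pose proof (Rmax_l (h x1) (h 1)); pose proof (Rmax_r (h x1) (h 1)); unfold Rmax in *; destruct Rle_dec; lra).
    assert (Hw3: w < h x2) by (unfold w; unfold Rmax; destruct Rle_dec; lra).
    assert (Hx2: x2 < 1) by (destruct (Req_dec x2 1); [subst; lra| lra]).
    destruct (IVT (fun s => 1 * h s + 0 * s + - w) x1 x2 (cont_lin h 1 0 (-w) Hc)) as [s1 [Hs1 Es1]];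
      [lra|lra|lra|].
    destruct (IVT (fun s => (-1) * h s + 0 * s + w) x2 1 (cont_lin h (-1) 0 w Hc)) as [s2 [Hs2 Es2]];
      [lra|lra|lra|].
    exists s1, s2. split; [lra|]. split; [lra|]. split; [|lra].
    intros ->. assert (s2 = x2) by lra. subst. lra.
  - set (w := (h x1 + h x2) / 2).
    assert (Hx1: 0 < x1) by (destruct (Req_dec x1 0); [subst; lra| lra]).
    destruct (IVT (fun s => (-1) * h s + 0 * s + w) 0 x1 (cont_lin h (-1) 0 w Hc)) as [s1 [Hs1 Es1]];
      [lra|unfold w; lra|unfold w; lra|].
    destruct (IVT (fun s => 1 * h s + 0 * s + - w) x1 x2 (cont_lin h 1 0 (-w) Hc)) as [s2 [Hs2 Es2]];
      [lra|unfold w; lra|unfold w; lra|].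
    exists s1, s2. split; [lra|]. split; [lra|]. split; [|lra].
    intros ->. assert (s2 = x1) by lra. subst. unfold w in *. lra.
Qed.

Lemma F01 lam : 1/6 < lam < 5/6 -> Flim lam 0 = 0 /\ Flim lam 1 = 0.
Proof.
  intros Hl. split.
  - apply (Flim_at lam 0 (0,0) Hl). simpl; tauto.
  - apply (Flim_at lam 0 (1,0) Hl). simpl; tauto.
Qed.

Lemma two_pts lam a b : 1/6 < lam < 5/6 -> b <> 0 ->
  exists x x', 0 <= x <= 1 /\ 0 <= x' <= 1 /\ x <> x' /\
    a * (x' - x) + b * (Flim lam x' - Flim lam x) = 0.
Proof.
  intros Hl Hb. destruct (F01 lam Hl) as [F0 F1].
  destruct (Req_dec a 0) as [Ha|Ha].
  { exists 0, 1. split; [lra|]. split; [lra|]. split; [lra|]. rewrite Ha, F0, F1. ring. }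
  set (t := - a / b).
  assert (Ha': a = - t * b) by (unfold t; field; exact Hb).
  assert (Ht: t <> 0) by (intro H; apply Ha; rewrite Ha', H; ring).
  destruct (Rlt_dec 0 t) as [Htp|Htn].
  - set (h := fun s => 1 * Flim lam s + (-t) * s + 0).
    destruct (INR_unbounded t) as [n Hn].
    destruct (proj1 (steep lam n Hl)) as [p [q [Hadj Hpq]]].
    pose proof (bp_inv lam n Hl) as [Hs [_ [Hr _]]].
    pose proof (adj_sorted _ _ _ Hs Hadj) as Hlt.
    destruct (adj_In _ _ _ Hadj) as [Hp Hq].
    pose proof (Flim_at lam n p Hl Hp). pose proof (Flim_at lam n q Hl Hq).
    pose proof (Hr p Hp). pose proof (Hr q Hq).
    destruct (gen2 h (cont_lin _ 1 (-t) 0 (fun x => Flim_cont lam x Hl)))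
      with (x1 := fst p) (x2 := fst q) as [s1 [s2 [Hs1 [Hs2 [Hne Heq]]]]].
    { unfold h. rewrite F0, F1. lra. }
    { lra. } { lra. }
    { unfold h. rewrite H, H0. nra. }
    exists s1, s2. split; [lra|]. split; [lra|]. split; [exact Hne|].
    unfold h in Heq. rewrite Ha'. nra.
  - assert (Htn': t < 0) by lra.
    set (h := fun s => (-1) * Flim lam s + t * s + 0).
    destruct (INR_unbounded (-t)) as [n Hn].
    destruct (proj2 (steep lam n Hl)) as [p [q [Hadj Hpq]]].
    pose proof (bp_inv lam n Hl) as [Hs [_ [Hr _]]].
    pose proof (adj_sorted _ _ _ Hs Hadj) as Hlt.
    destruct (adj_In _ _ _ Hadj) as [Hp Hq].
    pose proof (Flim_at lam n p Hl Hp). pose proof (Flim_at lam n q Hl Hq).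
    pose proof (Hr p Hp). pose proof (Hr q Hq).
    destruct (gen2 h (cont_lin _ (-1) t 0 (fun x => Flim_cont lam x Hl)))
      with (x1 := fst p) (x2 := fst q) as [s1 [s2 [Hs1 [Hs2 [Hne Heq]]]]].
    { unfold h. rewrite F0, F1. lra. }
    { lra. } { lra. }
    { unfold h. rewrite H, H0. nra. }
    exists s1, s2. split; [lra|]. split; [lra|]. split; [exact Hne|].
    unfold h in Heq. rewrite Ha'. nra.
Qed.


Lemma key_lin o1 o2 U1 U2 V1 V2 W1 W2 x y r2 :
  (U1-o1)^2+(U2-o2)^2 = r2 -> (V1-o1)^2+(V2-o2)^2 = r2 -> (U1-V1)^2+(U2-V2)^2 = 2*r2 ->
  (W1-o1)^2+(W2-o2)^2 = r2*(x^2+y^2) -> (W1-U1)^2+(W2-U2)^2 = r2*((x-1)^2+y^2) ->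
  (W1-V1)^2+(W2-V2)^2 = r2*(x^2+(y-1)^2) ->
  W1 = o1 + (U1-o1)*x + (V1-o1)*y /\ W2 = o2 + (U2-o2)*x + (V2-o2)*y.
Proof.
  intros HU HV HUV HW HWU HWV.
  set (u1 := U1 - o1) in *. set (u2 := U2 - o2) in *. set (v1 := V1 - o1) in *. set (v2 := V2 - o2) in *.
  set (w1 := W1 - o1) in *. set (w2 := W2 - o2) in *.
  assert (Huv: u1*v1 + u2*v2 = 0).
  { replace (U1 - V1) with (u1 - v1) in HUV by (unfold u1, v1; ring).
    replace (U2 - V2) with (u2 - v2) in HUV by (unfold u2, v2; ring). nra. }
  assert (Hwu: w1*u1 + w2*u2 = r2 * x).
  { replace (W1 - U1) with (w1 - u1) in HWU by (unfold u1, w1; ring).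
    replace (W2 - U2) with (w2 - u2) in HWU by (unfold u2, w2; ring). nra. }
  assert (Hwv: w1*v1 + w2*v2 = r2 * y).
  { replace (W1 - V1) with (w1 - v1) in HWV by (unfold v1, w1; ring).
    replace (W2 - V2) with (w2 - v2) in HWV by (unfold v2, w2; ring). nra. }
  assert (E: (w1 - x*u1 - y*v1)^2 + (w2 - x*u2 - y*v2)^2 =
    (w1^2+w2^2) + x^2*(u1^2+u2^2) + y^2*(v1^2+v2^2) - 2*x*(w1*u1+w2*u2) - 2*y*(w1*v1+w2*v2)
    + 2*x*y*(u1*v1+u2*v2)) by ring.
  rewrite HW, HU, HV, Hwu, Hwv, Huv in E.
  replace (r2 * (x ^ 2 + y ^ 2) + x ^ 2 * r2 + y ^ 2 * r2 - 2 * x * (r2 * x) - 2 * y * (r2 * y) + 2 * x * y * 0)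
    with 0 in E by ring.
  assert (E1: (w1 - x*u1 - y*v1)^2 = 0) by (pose proof (pow2_ge_0 (w1 - x*u1 - y*v1)); pose proof (pow2_ge_0 (w2 - x*u2 - y*v2)); lra).
  assert (E2: (w2 - x*u2 - y*v2)^2 = 0) by (pose proof (pow2_ge_0 (w1 - x*u1 - y*v1)); pose proof (pow2_ge_0 (w2 - x*u2 - y*v2)); lra).
  assert (w1 - x*u1 - y*v1 = 0) by nra. assert (w2 - x*u2 - y*v2 = 0) by nra.
  unfold w1, w2 in *. split; lra.
Qed.

Lemma dist2_sq p q : dist2 p q ^ 2 = (fst p - fst q)^2 + (snd p - snd q)^2.
Proof. unfold dist2. apply pow2_sqrt. pose proof (pow2_ge_0 (fst p - fst q)); pose proof (pow2_ge_0 (snd p - snd q)); lra. Qed.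

Lemma sim_sq (Phi : R*R -> R*R) r p q : (forall p q, dist2 (Phi p) (Phi q) = r * dist2 p q) ->
  (fst (Phi p) - fst (Phi q))^2 + (snd (Phi p) - snd (Phi q))^2 =
  r^2 * ((fst p - fst q)^2 + (snd p - snd q)^2).
Proof. intros H. rewrite <- !dist2_sq, H. ring. Qed.

Lemma sim_affine (Phi : R*R -> R*R) r : (forall p q, dist2 (Phi p) (Phi q) = r * dist2 p q) ->
  exists o1 o2 u1 u2 v1 v2, (forall x y, Phi (x,y) = (o1 + u1*x + v1*y, o2 + u2*x + v2*y)) /\
    u1^2+u2^2 = r^2 /\ v1^2+v2^2 = r^2 /\ u1*v1+u2*v2 = 0.
Proof.
  intros H.
  set (o := Phi (0,0)). set (U := Phi (1,0)). set (V := Phi (0,1)).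
  pose proof (sim_sq Phi r (1,0) (0,0) H) as HU.
  pose proof (sim_sq Phi r (0,1) (0,0) H) as HV.
  pose proof (sim_sq Phi r (1,0) (0,1) H) as HUV.
  cbn [fst snd] in HU, HV, HUV. fold o U V in HU, HV, HUV.
  exists (fst o), (snd o), (fst U - fst o), (snd U - snd o), (fst V - fst o), (snd V - snd o).
  split; [|split; [|split]].
  - intros x y.
    pose proof (sim_sq Phi r (x,y) (0,0) H) as HW.
    pose proof (sim_sq Phi r (x,y) (1,0) H) as HWU.
    pose proof (sim_sq Phi r (x,y) (0,1) H) as HWV.
    cbn [fst snd] in HW, HWU, HWV. fold o U V in HW, HWU, HWV.
    destruct (key_lin (fst o) (snd o) (fst U) (snd U) (fst V) (snd V) (fst (Phi (x,y))) (snd (Phi (x,y))) x y (r^2))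
      as [E1 E2]; try (rewrite ?HU, ?HV, ?HUV, ?HW, ?HWU, ?HWV; ring).
    rewrite (surjective_pairing (Phi (x,y))), E1, E2. reflexivity.
  - rewrite HU. ring.
  - rewrite HV. ring.
  - nra.
Qed.

Lemma axis lam Phi r : 1/6 < lam < 5/6 -> 0 < r ->
  (forall p q, dist2 (Phi p) (Phi q) = r * dist2 p q) ->
  (forall p, graphF lam p -> graphF lam (Phi p)) ->
  exists al c, Rabs al = r /\ forall p, fst (Phi p) = al * fst p + c.
Proof.
  intros Hl Hr Hd Hg.
  destruct (sim_affine Phi r Hd) as [o1 [o2 [u1 [u2 [v1 [v2 [HP [Hu [Hv Huv]]]]]]]]].
  assert (Hv1: v1 = 0).
  { destruct (Req_dec v1 0) as [E|Hne]; [exact E|exfalso].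
    destruct (two_pts lam u1 v1 Hl Hne) as [x [x' [Hx [Hx' [Hxx Heq]]]]].
    assert (G1: graphF lam (x, Flim lam x)) by (split; simpl; [lra|reflexivity]).
    assert (G2: graphF lam (x', Flim lam x')) by (split; simpl; [lra|reflexivity]).
    pose proof (Hg _ G1) as G1'. pose proof (Hg _ G2) as G2'.
    rewrite HP in G1', G2'. destruct G1' as [_ Y1]. destruct G2' as [_ Y2]. cbn [fst snd] in Y1, Y2.
    assert (Ex: o1 + u1 * x + v1 * Flim lam x = o1 + u1 * x' + v1 * Flim lam x') by lra.
    rewrite Ex in Y1.
    assert (Phi (x, Flim lam x) = Phi (x', Flim lam x')) by (rewrite !HP; f_equal; lra).
    pose proof (Hd (x, Flim lam x) (x', Flim lam x')) as Hdd.
    rewrite H, dist2_refl in Hdd.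
    pose proof (dist2_ge_x (x, Flim lam x) (x', Flim lam x')) as Hge. cbn [fst snd] in Hge.
    assert (dist2 (x, Flim lam x) (x', Flim lam x') = 0) by nra.
    rewrite H0 in Hge. apply Hxx. pose proof (Rabs_pos (x - x')).
    assert (Rabs (x - x') = 0) by lra. apply Rabs_eq_0 in H2. lra. }
  subst v1.
  assert (Hu2: u2 = 0).
  { assert (v2 <> 0) by (intro; subst; nra). apply (Rmult_eq_reg_r v2); [lra|exact H]. }
  subst u2.
  exists u1, o1. split.
  - assert (u1^2 = r^2) by lra.
    rewrite <- (Rabs_right r) by lra. apply Rsqr_eq_abs_0. unfold Rsqr. nra.
  - intros p. rewrite (surjective_pairing p), HP. simpl. ring.
Qed.


Definition cnt (z : R) (I : list (R*R)) : nat :=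
  length (filter (fun ar => if Rlt_dec z (fst ar + snd ar) then true else false) I).

Lemma cnt_mono z z' I : z <= z' -> (cnt z' I <= cnt z I)%nat.
Proof.
  intros H. induction I as [|ar I IH]; [unfold cnt; simpl; lia|]. unfold cnt in *. simpl.
  destruct (Rlt_dec z' (fst ar + snd ar)); destruct (Rlt_dec z (fst ar + snd ar)); simpl; try lia.
  lra.
Qed.

Lemma cnt_lt z z' I ar : z <= z' -> In ar I -> z < fst ar + snd ar <= z' -> (cnt z' I < cnt z I)%nat.
Proof.
  intros H Hin Har. induction I as [|b I IH]; [destruct Hin|]. unfold cnt in *. simpl.
  destruct Hin as [->|Hin].
  - destruct (Rlt_dec z' (fst ar + snd ar)); [lra|].
    destruct (Rlt_dec z (fst ar + snd ar)); [|lra]. simpl.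
    pose proof (cnt_mono z z' I H). unfold cnt in H0. lia.
  - specialize (IH Hin).
    destruct (Rlt_dec z' (fst b + snd b)); destruct (Rlt_dec z (fst b + snd b)); simpl; try lia.
    lra.
Qed.

Definition minr (z v : R) (I : list (R*R)) : R :=
  fold_right (fun ar acc => if Rlt_dec z (fst ar) then Rmin (fst ar) acc else acc) v I.

Lemma minr_props z v I : z < v ->
  z < minr z v I /\ minr z v I <= v /\ forall ar, In ar I -> z < fst ar -> minr z v I <= fst ar.
Proof.
  intros H. induction I as [|ar I [IH1 [IH2 IH3]]].
  - simpl. split; [lra|]. split; [lra|]. tauto.
  - simpl. destruct (Rlt_dec z (fst ar)) as [Hz|Hz].
    + split; [unfold Rmin; destruct Rle_dec; lra|].
      split; [unfold Rmin; destruct Rle_dec; lra|].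
      intros b [<-|Hb] Hzb. apply Rmin_l. eapply Rle_trans; [apply Rmin_r|]. apply IH3; assumption.
    + split; [lra|]. split; [lra|]. intros b [<-|Hb] Hzb; [lra|]. apply IH3; assumption.
Qed.

Lemma exists_right z v I :
  (forall x, 0 <= x <= 1 -> exists ar, In ar I /\ fst ar <= x <= fst ar + snd ar) ->
  0 <= z -> z < v -> v <= 1 -> exists ar, In ar I /\ fst ar <= z < fst ar + snd ar.
Proof.
  intros Hcov Hz Hzv Hv.
  destruct (minr_props z v I Hzv) as [M1 [M2 M3]].
  set (m := minr z v I) in *.
  destruct (Hcov ((z + m)/2) ltac:(lra)) as [ar [Hin [Ha Hb]]].
  exists ar. split; [exact Hin|]. split.
  - destruct (Rle_dec (fst ar) z) as [H|H]; [exact H|].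
    specialize (M3 ar Hin ltac:(lra)). lra.
  - destruct (Rle_dec (fst ar) z) as [H|H].
    + destruct (Rlt_dec z (fst ar + snd ar)); [assumption|lra].
    + specialize (M3 ar Hin ltac:(lra)). lra.
Qed.

Lemma best z I : (exists ar, In ar I /\ fst ar <= z < fst ar + snd ar) ->
  exists ar, In ar I /\ fst ar <= z < fst ar + snd ar /\
    forall b, In b I -> fst b <= z -> fst b + snd b <= fst ar + snd ar.
Proof.
  induction I as [|c I IH]; intros [ar [Hin H]]; [destruct Hin|].
  destruct (classic (exists ar, In ar I /\ fst ar <= z < fst ar + snd ar)) as [E|E].
  - destruct (IH E) as [a' [Hin' [Ha' Hb']]].
    destruct (Rle_dec (fst c) z) as [Hc|Hc];
    [destruct (Rlt_dec (fst a' + snd a') (fst c + snd c)) as [Hlt|Hlt]|].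
    + exists c. split; [left; reflexivity|]. split; [lra|].
      intros b [<-|Hb] Hbz; [lra|]. specialize (Hb' b Hb Hbz). lra.
    + exists a'. split; [right; exact Hin'|]. split; [lra|].
      intros b [<-|Hb] Hbz; [lra|]. apply Hb'; assumption.
    + exists a'. split; [right; exact Hin'|]. split; [lra|].
      intros b [<-|Hb] Hbz; [lra|]. apply Hb'; assumption.
  - destruct Hin as [->|Hin]; [|exfalso; apply E; exists ar; split; assumption].
    exists ar. split; [left; reflexivity|]. split; [lra|].
    intros b [<-|Hb] Hbz; [lra|].
    destruct (Rlt_dec z (fst b + snd b)); [|lra].
    exfalso. apply E. exists b. split; [exact Hb|lra].
Qed.


Lemma chain (d : R -> R -> R) (Dc dl : R) (I : list (R*R)) :
  (forall a b c, d a c <= d a b + d b c) -> (forall a, d a a = 0) -> 0 <= Dc -> 0 < dl ->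
  (forall ar, In ar I -> 0 < snd ar <= dl /\ forall z z', fst ar <= z <= fst ar + snd ar ->
     fst ar <= z' <= fst ar + snd ar -> d z z' <= Dc * snd ar) ->
  (forall x, 0 <= x <= 1 -> exists ar, In ar I /\ fst ar <= x <= fst ar + snd ar) ->
  forall u v, 0 <= u <= v -> v <= 1 -> d u v <= Dc * (2 * (v - u) + 2 * dl).
Proof.
  intros Htri Hrefl HD Hdl Hgood Hcov u v Huv Hv.
  assert (Main: forall n zp z, (cnt z I <= n)%nat -> 0 <= z <= v -> zp <= z ->
    (forall ar, In ar I -> fst ar <= zp -> fst ar + snd ar <= z) ->
    d z v <= Dc * (2 * v - z - zp + dl)).
  { induction n as [|n IH]; intros zp z Hc Hz Hzp Hpr.
    all: destruct (Req_dec z v) as [Ezv|Nzv];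
      [subst z; rewrite Hrefl; apply Rmult_le_pos; lra|].
    all: destruct (best z I (exists_right z v I Hcov ltac:(lra) ltac:(lra) Hv))
        as [ar [Hin [[Ha Hb0] Hmax]]].
    all: destruct (Hgood ar Hin) as [[Hr1 Hr2] Hg].
    all: assert (Hzpa: zp < fst ar) by (destruct (Rle_dec (fst ar) zp) as [H|H];
           [specialize (Hpr ar Hin H); lra|lra]).
    all: destruct (Rle_dec v (fst ar + snd ar)) as [Hbv|Hbv].
    1,3: eapply Rle_trans; [apply Hg; lra|]; apply Rmult_le_compat_l; lra.
    - exfalso. pose proof (cnt_lt z (fst ar + snd ar) I ar ltac:(lra) Hin ltac:(lra)). lia.
    - eapply Rle_trans. apply (Htri z (fst ar + snd ar) v).
      assert (H1: d z (fst ar + snd ar) <= Dc * snd ar) by (apply Hg; lra).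
      assert (H2: d (fst ar + snd ar) v <= Dc * (2 * v - (fst ar + snd ar) - z + dl)).
      { apply IH.
        - pose proof (cnt_lt z (fst ar + snd ar) I ar ltac:(lra) Hin ltac:(lra)). lia.
        - lra.
        - lra.
        - intros b Hb Hbz. apply Hmax; assumption. }
      assert (Dc * snd ar <= Dc * (fst ar + snd ar - zp)) by (apply Rmult_le_compat_l; lra).
      nra. }
  replace (2 * (v - u) + 2 * dl) with (2 * v - u - (u - dl) + dl) by ring.
  apply (Main (cnt u I) (u - dl) u (le_n _)); try lra.
  intros ar Hin Har. destruct (Hgood ar Hin) as [[_ Hr] _]. lra.
Qed.


Lemma unif (N : nat) (Q : nat -> R -> Prop) :
  (forall i, (i < N)%nat -> exists r, 0 < r < 1 /\ Q i r) ->
  exists rr, 0 < rr < 1 /\ forall i, (i < N)%nat -> exists r, 0 < r <= rr /\ Q i r.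
Proof.
  induction N as [|N IH]; intros H.
  - exists (1/2). split; [lra|]. intros i Hi. lia.
  - destruct IH as [rr [Hrr Hall]]. { intros i Hi. apply H. lia. }
    destruct (H N (Nat.lt_succ_diag_r N)) as [rN [HrN QN]].
    exists (Rmax rr rN). split. unfold Rmax; destruct Rle_dec; lra.
    intros i Hi. destruct (Nat.eq_dec i N) as [->|Hne].
    + exists rN. split; [split; [lra|apply Rmax_r]|exact QN].
    + destruct (Hall i ltac:(lia)) as [r [Hr Qr]]. exists r. split; [|exact Qr].
      split; [lra|]. eapply Rle_trans; [apply Hr|apply Rmax_l].
Qed.

Fixpoint comp (Phi : nat -> R*R -> R*R) (w : list nat) (p : R*R) : R*R :=
  match w with [] => p | i :: w' => Phi i (comp Phi w' p) end.

Fixpoint words (N : nat) (k : nat) : list (list nat) :=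
  match k with
  | O => [[]]
  | S k => flat_map (fun w => map (fun i => i :: w) (seq 0 N)) (words N k)
  end.

Lemma words_complete N k w : length w = k -> (forall i, In i w -> (i < N)%nat) -> In w (words N k).
Proof.
  revert w. induction k as [|k IH]; intros w Hl Hi.
  - destruct w; [left; reflexivity|discriminate].
  - destruct w as [|i w]; [discriminate|]. simpl. apply in_flat_map.
    exists w. split. apply IH. simpl in Hl; lia. intros j Hj; apply Hi; right; exact Hj.
    apply in_map_iff. exists i. split; [reflexivity|]. apply in_seq. split; [lia|]. simpl. apply Hi. left; reflexivity.
Qed.

Lemma words_sound N k w : In w (words N k) -> length w = k /\ forall i, In i w -> (i < N)%nat.
Proof.
  revert w. induction k as [|k IH]; intros w Hw.
  - destruct Hw as [<-|[]]. split; [reflexivity|intros i []].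
  - simpl in Hw. apply in_flat_map in Hw. destruct Hw as [w' [Hw' Hm]].
    apply in_map_iff in Hm. destruct Hm as [i [<- Hi]]. apply in_seq in Hi.
    destruct (IH w' Hw') as [Hl Hall]. split. simpl; lia.
    intros j [<-|Hj]; [lia|apply Hall, Hj].
Qed.

Lemma bp_head lam n : exists t, breakpoints lam n = (0,0) :: t.
Proof.
  induction n as [|n [t IH]]. exists [(1,0)]. reflexivity.
  rewrite bp_S, IH. apply refine_head.
Qed.

Lemma plen_bound (d : R -> R -> R) Dc dl (l : list (R*R)) :
  0 <= Dc -> 0 <= dl -> sorted_x l ->
  (forall p, In p l -> 0 <= fst p <= 1 /\ forall q, In q l -> dist2 p q = d (fst p) (fst q)) ->
  (forall u v, 0 <= u <= v -> v <= 1 -> d u v <= Dc * (2 * (v - u) + 2 * dl)) ->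
  forall p t, l = p :: t -> plen (p :: t) <= Dc * (2 * (1 - fst p) + 2 * dl * INR (length t)).
Proof.
  intros HD Hdl Hs Hp Hc p t ->. revert p Hs Hp.
  induction t as [|q t IH]; intros p Hs Hp.
  - simpl. destruct (Hp p (or_introl eq_refl)) as [Hr _]. nra.
  - change (plen (p :: q :: t)) with (dist2 p q + plen (q :: t)).
    destruct Hs as [Hpq Hs].
    assert (Hp': forall p0, In p0 (q :: t) -> 0 <= fst p0 <= 1 /\
                   forall q0, In q0 (q :: t) -> dist2 p0 q0 = d (fst p0) (fst q0)).
    { intros p0 Hp0. destruct (Hp p0 (or_intror Hp0)) as [H1 H2]. split; [exact H1|].
      intros q0 Hq0. apply H2. right; exact Hq0. }
    specialize (IH q Hs Hp').
    destruct (Hp p (or_introl eq_refl)) as [Hr1 Hd]. destruct (Hp q (or_intror (or_introl eq_refl))) as [Hr2 _].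
    rewrite (Hd q (or_intror (or_introl eq_refl))).
    specialize (Hc (fst p) (fst q) ltac:(lra) ltac:(lra)).
    change (length (q :: t)) with (S (length t)). rewrite S_INR. nra.
Qed.


Lemma seg_param al c : al <> 0 ->
  (forall z, Rmin c (c+al) <= z <= Rmin c (c+al) + Rabs al -> exists x, 0 <= x <= 1 /\ z = al * x + c) /\
  (forall x, 0 <= x <= 1 -> Rmin c (c+al) <= al * x + c <= Rmin c (c+al) + Rabs al).
Proof.
  intros Hal.
  assert (HM: (0 < al /\ Rmin c (c+al) = c /\ Rabs al = al) \/ (al < 0 /\ Rmin c (c+al) = c + al /\ Rabs al = - al)).
  { destruct (Rlt_dec 0 al).
    - left. split; [lra|]. split. apply Rmin_left; lra. apply Rabs_right; lra.
    - right. split; [lra|]. split. apply Rmin_right; lra. apply Rabs_left; lra. }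
  split.
  - intros z Hz. exists ((z - c) / al).
    assert (E: al * ((z - c) / al) = z - c) by (field; exact Hal).
    split; [|lra].
    destruct HM as [[H1 [H2 H3]]|[H1 [H2 H3]]]; rewrite H2, H3 in Hz; split; nra.
  - intros x Hx. destruct HM as [[H1 [H2 H3]]|[H1 [H2 H3]]]; rewrite H2, H3; split; nra.
Qed.

Definition iv (Phi : nat -> R*R -> R*R) (w : list nat) : R*R :=
  let c := fst (comp Phi w (0,0)) in let al := fst (comp Phi w (1,0)) - c in
  (Rmin c (c + al), Rabs al).

Theorem theorem1p4 (lam : R) (Hlam : 1/6 < lam < 5/6) :
  ~ exists (N : nat) (Phi : nat -> R * R -> R * R),
      (forall i, (i < N)%nat -> contracting_similarity (Phi i)) /\
      (forall p : R * R,
         graphF lam p <->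
         exists i, (i < N)%nat /\ exists q, graphF lam q /\ p = Phi i q).
Proof.
  intros [N [Phi [Hsim Hgr]]].
  assert (Hinc: forall i, (i < N)%nat -> forall p, graphF lam p -> graphF lam (Phi i p)).
  { intros i Hi p Hp. apply Hgr. exists i. split; [exact Hi|]. exists p. split; [exact Hp|reflexivity]. }
  destruct (unif N (fun i r => (forall p q, dist2 (Phi i p) (Phi i q) = r * dist2 p q) /\
                      exists al c, Rabs al = r /\ forall p, fst (Phi i p) = al * fst p + c))
    as [rr [Hrr HQ]].
  { intros i Hi. destruct (Hsim i Hi) as [r [Hr Hd]]. exists r. split; [exact Hr|]. split; [exact Hd|].
    apply (axis lam (Phi i) r Hlam (proj1 Hr) Hd (Hinc i Hi)). }
  assert (CP: forall w, (forall i, In i w -> (i < N)%nat) ->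
    (forall p, graphF lam p -> graphF lam (comp Phi w p)) /\
    exists r al c, 0 < r <= rr ^ (length w) /\ Rabs al = r /\
      (forall p, fst (comp Phi w p) = al * fst p + c) /\
      (forall p q, dist2 (comp Phi w p) (comp Phi w q) = r * dist2 p q)).
  { induction w as [|i w IH]; intros Hw.
    - split; [simpl; tauto|]. exists 1, 1, 0. simpl. split; [lra|]. split; [apply Rabs_R1|].
      split; intros; ring.
    - destruct IH as [IG [r [al [c [Hr [Hal [Hf Hd]]]]]]]. { intros j Hj; apply Hw; right; exact Hj. }
      assert (Hi: (i < N)%nat) by (apply Hw; left; reflexivity).
      destruct (HQ i Hi) as [ri [Hri [Hdi [ali [ci [Hali Hfi]]]]]].
      split. { intros p Hp. simpl. apply Hinc; [exact Hi|]. apply IG, Hp. }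
      exists (ri * r), (ali * al), (ali * c + ci). simpl.
      split. { split. apply Rmult_lt_0_compat; lra. apply Rmult_le_compat; lra. }
      split. { rewrite Rabs_mult, Hali, Hal. reflexivity. }
      split. { intros p. rewrite Hfi, Hf. ring. }
      intros p q. rewrite Hdi, Hd. ring. }
  assert (Cover: forall k p, graphF lam p -> exists w, length w = k /\ (forall i, In i w -> (i < N)%nat) /\
                   exists q, graphF lam q /\ p = comp Phi w q).
  { induction k as [|k IH]; intros p Hp.
    - exists []. split; [reflexivity|]. split; [intros i []|]. exists p. split; [exact Hp|reflexivity].
    - destruct (proj1 (Hgr p) Hp) as [i [Hi [q [Hq ->]]]].
      destruct (IH q Hq) as [w [Hl [Hw [q' [Hq' ->]]]]].
      exists (i :: w). split; [simpl; lia|]. split.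
      + intros j [<-|Hj]; [exact Hi|apply Hw, Hj].
      + exists q'. split; [exact Hq'|reflexivity]. }
  set (Dc := 1 + E lam 0).
  assert (HDc: 0 <= Dc) by (unfold Dc; pose proof (E_pos lam 0 Hlam); lra).
  set (d := fun u v => dist2 (u, Flim lam u) (v, Flim lam v)).
  assert (Gdist: forall x x', 0 <= x <= 1 -> 0 <= x' <= 1 -> d x x' <= Dc).
  { intros x x' Hx Hx'. unfold d. eapply Rle_trans; [apply dist2_le_sum|]. cbn [fst snd].
    pose proof (Flim_range lam x Hlam). pose proof (Flim_range lam x' Hlam).
    assert (Rabs (x - x') <= 1) by (apply Rabs_le; lra).
    assert (Rabs (Flim lam x - Flim lam x') <= E lam 0) by (apply Rabs_le; lra).
    unfold Dc. lra. }
  assert (CB: forall k u v, 0 <= u <= v -> v <= 1 -> d u v <= Dc * (2 * (v - u) + 2 * rr ^ k)).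
  { intros k. apply (chain d Dc (rr ^ k) (map (iv Phi) (words N k))).
    - intros a b c. apply dist2_tri.
    - intros a. apply dist2_refl.
    - exact HDc.
    - apply pow_lt. lra.
    - intros ar Har. apply in_map_iff in Har. destruct Har as [w [<- Hw]].
      destruct (words_sound N k w Hw) as [Hlen Hall].
      destruct (CP w Hall) as [IG [r [al [c [Hr [Hal [Hf Hd]]]]]]].
      assert (Hiv: iv Phi w = (Rmin c (c + al), Rabs al)).
      { unfold iv. rewrite !Hf. cbn [fst]. f_equal; f_equal; ring. }
      rewrite Hiv. cbn [fst snd]. rewrite Hal. rewrite Hlen in Hr.
      split; [exact Hr|].
      assert (Hal0: al <> 0) by (intro E0; rewrite E0, Rabs_R0 in Hal; lra).
      destruct (seg_param al c Hal0) as [SP1 _]. rewrite Hal in SP1.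
      intros z z' Hz Hz'.
      destruct (SP1 z Hz) as [x [Hx Ex]]. destruct (SP1 z' Hz') as [x' [Hx' Ex']].
      assert (Gx: graphF lam (x, Flim lam x)) by (split; simpl; [lra|reflexivity]).
      assert (Gx': graphF lam (x', Flim lam x')) by (split; simpl; [lra|reflexivity]).
      assert (Cz: comp Phi w (x, Flim lam x) = (z, Flim lam z)).
      { destruct (IG _ Gx) as [_ Hs]. rewrite (surjective_pairing (comp Phi w (x, Flim lam x))).
        rewrite Hs, Hf. cbn [fst]. rewrite <- Ex. reflexivity. }
      assert (Cz': comp Phi w (x', Flim lam x') = (z', Flim lam z')).
      { destruct (IG _ Gx') as [_ Hs]. rewrite (surjective_pairing (comp Phi w (x', Flim lam x'))).
        rewrite Hs, Hf. cbn [fst]. rewrite <- Ex'. reflexivity. }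
      unfold d. rewrite <- Cz, <- Cz', Hd.
      specialize (Gdist x x' Hx Hx'). unfold d in Gdist. nra.
    - intros x Hx.
      assert (Gx: graphF lam (x, Flim lam x)) by (split; simpl; [lra|reflexivity]).
      destruct (Cover k _ Gx) as [w [Hlen [Hall [q [Hq Eq]]]]].
      destruct (CP w Hall) as [IG [r [al [c [Hr [Hal [Hf Hd]]]]]]].
      assert (Hiv: iv Phi w = (Rmin c (c + al), Rabs al)).
      { unfold iv. rewrite !Hf. cbn [fst]. f_equal; f_equal; ring. }
      exists (iv Phi w). split.
      + apply in_map. apply words_complete; assumption.
      + rewrite Hiv. cbn [fst snd].
        assert (Hal0: al <> 0) by (intro E0; rewrite E0, Rabs_R0 in Hal; lra).
        destruct (seg_param al c Hal0) as [_ SP2].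
        assert (Ex: x = al * fst q + c) by (rewrite <- Hf, <- Eq; reflexivity).
        rewrite Ex. apply SP2. destruct Hq as [Hq _]. exact Hq. }
  set (b := 2/3 + 2 * lam).
  destruct (Pow_x_infinity b ltac:(unfold b; rewrite Rabs_right; lra) (4 * Dc + 1)) as [M HM].
  specialize (HM M (le_n M)). rewrite Rabs_right in HM by (apply Rle_ge, pow_le; unfold b; lra).
  destruct (bp_head lam M) as [t Ht].
  set (len := INR (length t)).
  assert (Hlen0: 0 <= len) by apply pos_INR.
  destruct (pow_lt_1_zero rr ltac:(rewrite Rabs_right; lra) (1 / (len + 1)) ltac:(apply Rdiv_lt_0_compat; lra))
    as [K HK].
  specialize (HK K (le_n K)). rewrite Rabs_right in HK by (apply Rle_ge, pow_le; lra).
  assert (HK2: rr ^ K * len <= 1).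
  { assert (rr ^ K * (len + 1) < 1).
    { apply (Rmult_lt_reg_r (/ (len + 1))). apply Rinv_0_lt_compat; lra.
      replace (rr ^ K * (len + 1) * / (len + 1)) with (rr ^ K) by (field; lra).
      replace (1 * / (len + 1)) with (1 / (len + 1)) by (field; lra). exact HK. }
    pose proof (pow_le rr K ltac:(lra)). nra. }
  destruct (bp_inv lam M Hlam) as [Hs [_ [Hr [_ [_ Hplen]]]]].
  assert (PB := plen_bound d Dc (rr ^ K) (breakpoints lam M) HDc ltac:(apply pow_le; lra) Hs).
  assert (Hpts: forall p, In p (breakpoints lam M) -> 0 <= fst p <= 1 /\
            forall q, In q (breakpoints lam M) -> dist2 p q = d (fst p) (fst q)).
  { intros p Hp. split; [apply Hr, Hp|]. intros q Hq. unfold d.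
    rewrite (Flim_at lam M p Hlam Hp), (Flim_at lam M q Hlam Hq).
    rewrite <- !surjective_pairing. reflexivity. }
  specialize (PB Hpts (CB K) (0,0) t Ht).
  rewrite <- Ht in PB. fold len in PB. cbn [fst] in PB.
  fold b in Hplen.
  assert (Dc * (2 * (1 - 0) + 2 * rr ^ K * len) <= 4 * Dc) by nra.
  lra.
Qed.
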